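(* Let $T\in\mathbb{C}^{l\times l}$ and let $\lambda_1,\dots,\lambda_k$ be $k$ distinct eigenvalues of $T$. Then for every $\gamma=(\gamma_{ij})_{1\le i<j\le k}$ with $\gamma_{ij}\in\mathbb{C}$, one has $\operatorname{rank}(Q_T(\gamma))\le kl-k$, equivalently $s_{kl-(k-1)}(Q_T(\gamma))=0$.
   Context: For $T\in\mathbb{C}^{l\times l}$, scalars $\lambda_1,\dots,\lambda_k\in\mathbb{C}$ and $\gamma=(\gamma_{ij})_{1\le i<j\le k}\in\mathbb{C}^{k(k-1)/2}$, $Q_T(\gamma)\in\mathbb{C}^{kl\times kl}$ is the $k\times k$ block upper triangular matrix whose $(i,i)$ block is $T-\lambda_i I_l$, whose $(i,j)$ block for $i<j$ is $\gamma_{ij}I_l$, and whose blocks below the diagonal are zero. $s_j(\cdot)$ denotes the $j$-th largest singular value. *)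

(* Defs.v *)
From HB Require Import structures.
From mathcomp Require Import all_boot all_order all_algebra.
From mathcomp Require Import reals.
From mathcomp Require Import complex.
Set Implicit Arguments. Unset Strict Implicit. Unset Printing Implicit Defensive.
Import Order.TTheory GRing.Theory Num.Theory.
Local Open Scope ring_scope.
Local Open Scope complex_scope.

(* Entries of gam with i >= j are unused. *)
Definition QT (R : realType) (l k : nat) (T : 'M[R[i]]_l)
    (lam : 'I_k -> R[i]) (gam : 'I_k -> 'I_k -> R[i])
    : 'M[R[i]]_(\sum_(i < k) l) :=
  \mxblock_(i < k, j < k)
     (if i == j then T - (lam i)%:M
      else if (i < j)%N then (gam i j)%:M else (0 : 'M[R[i]]_l)).

(* Main.v *)
Require Import Defs.
From HB Require Import structures.
From mathcomp Require Import all_boot all_order all_algebra.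
From mathcomp Require Import reals.
From mathcomp Require Import complex.
From mathcomp Require Import zify.
Set Implicit Arguments. Unset Strict Implicit. Unset Printing Implicit Defensive.
Import Order.TTheory GRing.Theory Num.Theory.
Local Open Scope ring_scope.

Section W.
Variables (F : fieldType) (k : nat) (lam : 'I_k -> F) (gam : 'I_k -> 'I_k -> F).
Variable p : 'I_k.

Definition fstep (j : nat) (s : seq F) : F :=
  if (j < p)%N then 0 else if j == p then 1 else
  - (\sum_(i < k | (i < j)%N) s`_i * gam i (insubd p j)) / (lam p - lam (insubd p j)).

Fixpoint wseq (n : nat) : seq F :=
  if n is n'.+1 then rcons (wseq n') (fstep n' (wseq n')) else [::].

Lemma insubd_ord (j : 'I_k) : insubd p (j : nat) = j.
Proof. by apply: val_inj; rewrite val_insubd ltn_ord. Qed.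

Lemma size_wseq n : size (wseq n) = n.
Proof. by elim: n => //= n IH; rewrite size_rcons IH. Qed.

Lemma wseq_nth n j : (j < n)%N -> (wseq n)`_j = fstep j (wseq j).
Proof.
elim: n => // n IH; rewrite ltnS leq_eqVlt => /orP[/eqP ->|hj] /=.
  by rewrite nth_rcons size_wseq ltnn eqxx.
by rewrite nth_rcons size_wseq hj IH.
Qed.

Lemma wseq_stable m n j : (m <= n)%N -> (j < m)%N -> (wseq n)`_j = (wseq m)`_j.
Proof.
move=> hmn hj; rewrite !wseq_nth //; exact: leq_trans hj hmn.
Qed.

Definition w (j : 'I_k) : F := (wseq k)`_j.

Lemma w_lt (j : 'I_k) : (j < p)%N -> w j = 0.
Proof. by move=> h; rewrite /w wseq_nth // /fstep h. Qed.

Lemma w_p : w p = 1.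
Proof. by rewrite /w wseq_nth // /fstep ltnn eqxx. Qed.

Hypothesis lam_inj : injective lam.

Lemma w_key (j : 'I_k) :
  w j * (lam p - lam j) + \sum_(i < k | (i < j)%N) w i * gam i j = 0.
Proof.
have hs : \sum_(i < k | (i < j)%N) w i * gam i j =
          \sum_(i < k | (i < j)%N) (wseq j)`_i * gam i j.
  by apply: eq_bigr => i hi; rewrite /w (@wseq_stable j k i (ltnW (ltn_ord j)) hi).
case: (ltnP j p) => hjp.
  rewrite w_lt // mul0r add0r big1 // => i hi.
  by rewrite w_lt ?mul0r // (ltn_trans hi hjp).
case: (eqVneq j p) => [->|hne].
  rewrite subrr mulr0 add0r big1 // => i hi; by rewrite w_lt ?mul0r.
have hlt : (p < j)%N by rewrite ltn_neqAle eq_sym hne hjp.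
have hl : lam p - lam j != 0.
  by rewrite subr_eq0; apply/eqP => /lam_inj /eqP; rewrite eq_sym (negbTE hne).
rewrite /w wseq_nth // /fstep ltnNge (ltnW hlt) /=.
have -> : (nat_of_ord j == nat_of_ord p) = false by apply/negbTE.
rewrite insubd_ord -/(w _).
under [X in _ + X]eq_bigr do rewrite -/(w _).
by rewrite hs divfK // addNr.
Qed.
End W.

Lemma blk_zero (F : fieldType) l k (T : 'M[F]_l) (lam : 'I_k -> F) gam
  (lam_inj : injective lam) (u : 'I_k -> 'rV[F]_l)
  (hu : forall i, u i *m T = lam i *: u i) (p j : 'I_k) :
  \sum_(i < k) (w lam gam p i *: u p) *m
     (if i == j then T - (lam i)%:M
      else if (i < j)%N then (gam i j)%:M else (0 : 'M[F]_l)) = 0.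
Proof.
rewrite (bigD1 j) //= eqxx mulmxBr -scalemxAl hu mul_mx_scalar scalerA.
have -> : \sum_(i < k | i != j) (w lam gam p i *: u p) *m
     (if i == j then T - (lam i)%:M
      else if (i < j)%N then (gam i j)%:M else (0 : 'M[F]_l)) =
   (\sum_(i < k | (i < j)%N) w lam gam p i * gam i j) *: u p.
  rewrite scaler_suml [RHS](bigID (fun i => i == j)) /= [X in _ = X + _]big1; last first.
    by move=> i /andP[h /eqP e]; move: h; rewrite e ltnn.
  rewrite add0r (bigID (fun i : 'I_k => (i < j)%N) (fun i => i != j)) /= [X in _ + X]big1; last first.
    by move=> i /andP[/negbTE -> /negbTE ->]; rewrite mulmx0.
  rewrite addr0; apply: eq_big => [i|i /andP[hi hij]].
    by rewrite andbC; case: (ltnP i j) => // h; rewrite ltn_eqF.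
  by rewrite (negbTE hi) hij mul_mx_scalar scalerA mulrC.
rewrite scalerA -scalerBl -scalerDl.
have h := w_key gam p lam_inj j.
suff -> : w lam gam p j * lam p - lam j * w lam gam p j +
   \sum_(i < k | (i < j)%N) w lam gam p i * gam i j = 0 by rewrite scale0r.
by rewrite -[RHS]h mulrBr (mulrC (lam j)).
Qed.

Lemma row_sumE (F : fieldType) m n (I : finType) (E : I -> 'M[F]_(m, n)) p :
  row p (\sum_i E i) = \sum_i row p (E i).
Proof. by apply/matrixP => a b; rewrite !mxE !summxE; apply: eq_bigr => i _; rewrite mxE. Qed.

Lemma main_gen (F : fieldType) l k (T : 'M[F]_l) (lam : 'I_k -> F)
  (lam_inj : injective lam) (lam_eig : forall i, eigenvalue T (lam i))
  (gam : 'I_k -> 'I_k -> F) :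
  (\rank (\mxblock_(i < k, j < k)
     (if i == j then T - (lam i)%:M
      else if (i < j)%N then (gam i j)%:M else (0 : 'M[F]_l))%R) <= k * l - k)%N.
Proof.
set Q := mxblock _.
have : forall i, exists2 v : 'rV_l, v *m T = lam i *: v & v != 0.
  by move=> i; apply/eigenvalueP.
move=> /fin_all_exists2 [u hu hu0].
pose W (i : 'I_k) : 'M[F]_(k, l) := \matrix_(p < k) (w lam gam p i *: u p).
pose K : 'M[F]_(k, \sum_(i < k) l) := \mxrow_i W i.
have KQ : K *m Q = 0.
  rewrite /K /Q mul_mxrow_mxblock -(mxrow0 (q_ := fun _ : 'I_k => l)).
  apply: eq_mxrow => j; apply/row_matrixP => p.
  rewrite row0 row_sumE.
  under eq_bigr do rewrite row_mul rowK.
  exact: blk_zero.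
have indep : forall a : 'rV[F]_k, a *m K = 0 -> a = 0.
  move=> a haK.
  have hb : forall i, \sum_p a 0 p *: (w lam gam p i *: u p) = 0.
    move=> i; have := congr1 (fun M => submxrow M i) haK.
    rewrite /K mul_mxrow mxrowK submxrow0 mulmx_sum_row => h; rewrite -[X in _ = X]h.
    by apply: eq_bigr => p _; rewrite rowK.
  have ind : forall n (p : 'I_k), (p < n)%N -> a 0 p = 0.
    elim=> [//|n IH] p; rewrite ltnS leq_eqVlt => /orP[/eqP hpn|]; last exact: IH.
    have := hb p; rewrite (bigD1 p) //= w_p scale1r big1 ?addr0.
      by move/eqP; rewrite scaler_eq0 (negbTE (hu0 p)) orbF => /eqP.
    move=> q hq; case: (ltnP q p) => hqp.
      by rewrite IH ?scale0r // -hpn.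
    have hpq : (p < q)%N by rewrite ltn_neqAle hqp andbT; apply: contraNneq hq => /val_inj ->.
    by rewrite w_lt // scale0r scaler0.
  apply/matrixP => i p; rewrite ord1 mxE; exact: (ind k).
have rK : \rank K = k.
  apply/eqP; change (row_free K); rewrite -kermx_eq0; apply/eqP/row_matrixP => i.
  by rewrite row0; apply: indep; rewrite -row_mul mulmx_ker row0.
have sK : (K <= kermx Q)%MS by apply/sub_kermxP.
have h1 := mxrankS sK; rewrite rK mxrank_ker in h1.
have h2 := rank_leq_row Q.
have hn : (\sum_(i < k) l = k * l)%N by rewrite big_const_ord iter_addn_0 mulnC.
move: (\rank Q) h1 h2; rewrite hn => r h1 h2.
lia.
Qed.

Local Open Scope complex_scope.

Theorem mainTheorem2 (R : realType) (l k : nat) (T : 'M[R[i]]_l)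
    (lam : 'I_k -> R[i]) (lam_inj : injective lam)
    (lam_eig : forall i : 'I_k, eigenvalue T (lam i))
    (gam : 'I_k -> 'I_k -> R[i]) :
  (\rank (QT T lam gam) <= k * l - k)%N.
Proof. exact: main_gen. Qed.
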